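(* Let $t\ge1$ be an integer, $N=\frac{t(t-1)}{2}$, let $(\theta_1,\dots,\theta_t)\in\mathbb{R}^t$, and let $p_1<p_2<\cdots<p_{N+1}$ be $N+1$ prime numbers; set $p_0:=1$. Then there is at least one $l\in\{1,\dots,N+1\}$ such that $$\min_{\substack{1\le i\le j\le t\\ k\in\mathbb{Z},\ p_l\nmid k}}\left|\,|\theta_i-\theta_j|-\frac{k}{p_l}\right|\ \ge\ \frac{1}{2p_{N}p_{N+1}}.$$ *)

(* Defs.v *)
From mathcomp Require Import all_boot all_order all_algebra.
From mathcomp Require Import reals.

(* Main.v *)
Require Import Defs.
From mathcomp Require Import all_boot all_order all_algebra.
From mathcomp Require Import reals boolp ring.
Import Order.TTheory GRing.Theory Num.Theory.
Local Open Scope ring_scope.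

Lemma sep (R : realType) (a b : nat) (k k' : int) : prime a -> prime b -> a != b ->
  ~~ (a%:Z %| k)%Z -> 1 / (a%:R * b%:R) <= `|k%:~R / a%:R - k'%:~R / b%:R| :> R.
Proof.
move=> pa pb nab nd.
have a0 : a%:R != 0 :> R by rewrite pnatr_eq0 -lt0n prime_gt0.
have b0 : b%:R != 0 :> R by rewrite pnatr_eq0 -lt0n prime_gt0.
set z : int := (k * b%:Z - k' * a%:Z)%R.
have ez : k%:~R / a%:R - k'%:~R / b%:R = z%:~R / (a%:R * b%:R) :> R.
  rewrite /z intrB !intrM /=. rewrite !pmulrn. field. by rewrite a0 b0.
have z0 : z != 0.
  apply: contra nd; rewrite /z subr_eq0 => /eqP e.
  have : (a%:Z %| k * b%:Z)%Z by rewrite e dvdz_mull // dvdzz.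
  rewrite Gauss_dvdzl // coprimezE !absz_nat prime_coprime // dvdn_prime2 //.
have ab0 : 0 < a%:R * b%:R :> R by rewrite mulr_gt0 // ltr0n prime_gt0.
rewrite ez normrM normfV (gtr0_norm ab0) ler_pM2r ?invr_gt0 //.
rewrite -intr_norm. rewrite ler1z. by rewrite -gtz0_ge1 normr_gt0.
Qed.

Lemma dist_set (R : realType) (t : nat) (theta : 'I_t -> R) (i j i' j' : 'I_t) :
  i != j -> [set i; j] = [set i'; j'] ->
  `|theta i - theta j| = `|theta i' - theta j'|.
Proof.
move=> nij e.
have : i \in [set i'; j'] by rewrite -e !inE eqxx.
have : j \in [set i'; j'] by rewrite -e !inE eqxx orbT.
rewrite !inE => /orP [] /eqP ej /orP [] /eqP ei; rewrite ei ej ?eqxx in nij *.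
all: try done.
all: try exact: distrC.
Qed.

Lemma pmono (p : nat -> nat) (N : nat) :
  (forall l : nat, (1 <= l <= N)%N -> (p l < p l.+1)%N) ->
  forall l m, (1 <= l)%N -> (l <= m)%N -> (m <= N + 1)%N -> (p l <= p m)%N.
Proof.
move=> hinc l m h1; elim: m => [|m IH] hlm hm.
  by rewrite leqn0 in hlm; move/eqP: hlm => e; rewrite e in h1.
rewrite leq_eqVlt in hlm; case/orP: hlm => [/eqP -> //|hlm].
apply: leq_trans (IH hlm _) _; first by apply: leq_trans hm; rewrite leqnSn.
apply: ltnW; apply: hinc; rewrite (leq_trans h1 hlm) /=.
by rewrite addn1 ltnS in hm.
Qed.

Theorem lemma4 (R : realType) (t : nat) (theta : 'I_t -> R) (p : nat -> nat) :
  (1 <= t)%N ->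
  p 0%N = 1%N ->
  (forall l : nat, (1 <= l <= (t * (t - 1)) %/ 2 + 1)%N -> prime (p l)) ->
  (forall l : nat, (1 <= l <= (t * (t - 1)) %/ 2)%N -> (p l < p l.+1)%N) ->
  exists l : nat, (1 <= l <= (t * (t - 1)) %/ 2 + 1)%N /\
    forall (i j : 'I_t) (k : int), (i <= j)%N -> ~~ ((p l)%:Z %| k)%Z ->
      `| `|theta i - theta j| - k%:~R / (p l)%:R |
        >= 1 / (2 * (p ((t * (t - 1)) %/ 2)%N)%:R
                  * (p ((t * (t - 1)) %/ 2 + 1)%N)%:R).
Proof.
set N := ((t * (t - 1)) %/ 2)%N.
move=> t1 p0 hpr hinc.
set eps := 1 / _.
have mono := pmono _ _ hinc.
have pgt0 : forall l, (l <= N + 1)%N -> (0 < p l)%N.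
  move=> [|l] hl; first by rewrite p0.
  by apply: prime_gt0; apply: hpr.
have PNge1 : 1 <= (p N)%:R :> R by rewrite ler1n pgt0 // leq_addr.
have PN1gt0 : 0 < (p (N + 1))%:R :> R by rewrite ltr0n pgt0.
have epsgt0 : 0 < eps by rewrite /eps divr_gt0 // !mulr_gt0 // (lt_le_trans ltr01 PNge1).
have diag : forall l, (1 <= l <= N + 1)%N -> eps <= 1 / (p l)%:R.
  move=> l /andP [h1 h2].
  have pl0 : 0 < (p l)%:R :> R by rewrite ltr0n pgt0.
  rewrite /eps ler_pdivrMr ?mulr_gt0 // ?(lt_le_trans ltr01 PNge1) //.
  rewrite mulrC mulrA ler_pdivlMr // mul1r.
  have : (p l)%:R <= (p (N + 1))%:R :> R by rewrite ler_nat mono.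
  move=> hle; apply: (le_trans hle).
  rewrite mulr1; apply: ler_peMl; first exact: ltW.
  apply: (le_trans PNge1); apply: ler_peMl; first exact: le_trans ler01 PNge1.
  by rewrite ler1n.
have core : forall l m d (k k' : int), (1 <= l)%N -> (l < m)%N -> (m <= N + 1)%N ->
    ~~ ((p l)%:Z %| k)%Z -> `|d - k%:~R / (p l)%:R| < eps ->
    `|d - k'%:~R / (p m)%:R| < eps -> False.
  move=> l m d k k' h1 hlm hm nd hl hm'.
  have hlN : (l <= N)%N by move: (leq_trans hlm hm); rewrite addn1 ltnS.
  have plm : (p l < p m)%N.
    apply: (leq_trans (hinc l _)); first by rewrite h1.
    by apply: mono.
  have := sep R (p l) (p m) k k' (hpr l _) (hpr m _) _ nd.
  rewrite h1 (leq_trans hlN (leq_addr _ _)) (leq_trans h1 (ltnW hlm)) hm.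
  rewrite neq_ltn plm => /(_ isT isT isT) hs.
  have : `|k%:~R / (p l)%:R - k'%:~R / (p m)%:R| < eps + eps :> R.
    apply: le_lt_trans (ltrD hl hm').
    rewrite (distrC d (k%:~R / _)); exact: ler_distD.
  rewrite ltNge => /negP; apply; apply: le_trans hs.
  have pl0 : 0 < (p l)%:R :> R by rewrite ltr0n pgt0 // (leq_trans hlN (leq_addr _ _)).
  have pm0 : 0 < (p m)%:R :> R by rewrite ltr0n pgt0.
  have e2 : eps + eps = 1 / ((p N)%:R * (p (N + 1))%:R).
    rewrite /eps -mulr2n -mulr_natl -mulrA. field.
    by rewrite !lt0r_neq0 // (lt_le_trans ltr01 PNge1).
  rewrite e2 !mul1r lef_pV2 ?posrE ?mulr_gt0 // ?(lt_le_trans ltr01 PNge1) //.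
  rewrite -!natrM ler_nat; apply: leq_mul; apply: mono => //.
  - by rewrite leq_addr.
  - exact: leq_trans h1 (ltnW hlm).
case: (pselect (exists l : nat, (1 <= l <= N + 1)%N /\
    forall (i j : 'I_t) (k : int), (i <= j)%N -> ~~ ((p l)%:Z %| k)%Z ->
      eps <= `| `|theta i - theta j| - k%:~R / (p l)%:R |)) => // H.
exfalso.
have ex : forall l : 'I_(N + 1), exists pr : 'I_t * 'I_t, pr.1 != pr.2 /\
    exists k : int, ~~ ((p l.+1)%:Z %| k)%Z /\
      `| `|theta pr.1 - theta pr.2| - k%:~R / (p l.+1)%:R | < eps.
  move=> l.
  case: (pselect (exists pr : 'I_t * 'I_t, pr.1 != pr.2 /\
    exists k : int, ~~ ((p l.+1)%:Z %| k)%Z /\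
      `| `|theta pr.1 - theta pr.2| - k%:~R / (p l.+1)%:R | < eps)) => // Hn.
  exfalso; apply: H; exists l.+1; split; first by rewrite /= ltn_ord.
  move=> i j k hij nd.
  have [eij|nij] := eqVneq i j.
    rewrite eij subrr normr0 sub0r normrN normrM normfV (ger0_norm (ler0n _ _)).
    apply: le_trans (diag l.+1 _) _; first by rewrite /= ltn_ord.
    rewrite ler_pM2r ?invr_gt0 ?ltr0n ?pgt0 ?ltn_ord //.
    rewrite -intr_norm ler1z -gtz0_ge1 normr_gt0.
    by apply: contraNneq nd => ->; rewrite dvdz0.
  rewrite leNgt; apply/negP => hlt; apply: Hn; exists (i, j); split => //.
  by exists k.
have [f hf] := choice ex.
pose h l := [set (f l).1; (f l).2].
have hinj : injective h.
  move=> l m ehm; apply/eqP; apply/negPn/negP => nlm.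
  have [_ [k [ndk hk]]] := hf l.
  have [nm [k' [ndk' hk']]] := hf m.
  have [nl _] := hf l.
  have ed := dist_set _ _ theta _ _ _ _ nl ehm.
  rewrite ed in hk.
  case: (ltngtP l m) => hc.
  - by apply: (core l.+1 m.+1 _ k k' _ _ _ ndk hk hk').
  - by apply: (core m.+1 l.+1 _ k' k _ _ _ ndk' hk' hk).
  - by move: nlm; rewrite (val_inj hc) eqxx.
have hsub : h @: setT \subset [set A : {set 'I_t} | #|A| == 2%N].
  apply/subsetP => A /imsetP [l _ ->]; rewrite inE cards2.
  by have [-> _] := hf l.
have := subset_leq_card hsub.
rewrite card_draws card_ord bin2 card_imset // cardsT card_ord.
by rewrite -divn2 -subn1 -/N addn1 ltnn.
Qed.
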